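(* Assume complete resource pooling and let $B^s=B\prod_{j=1}^J\beta_{s_j}$. For every permutation $(S_1,\ldots,S_J)$ of $\mathcal{S}$, binary words $w_1,\ldots,w_{J-1}$ and nonnegative integers $n_\ell,m_\ell,r_\ell$, with $\alpha_{(\ell)}=\alpha_{\mathcal{U}(\{S_1,\ldots,S_\ell\})}$ and the convention $0^0=1$, the processes $W,U,X,Y,V,R$ defined below have stationary distributions $$\pi_W(S_1,w_1,\ldots,w_{J-1},S_J)=B^s\prod_{\ell=1}^{J-1}\alpha_{(\ell)}^{\#0(w_\ell)}\beta_{\{S_{\ell+1},\ldots,S_J\}}^{\#1(w_\ell)},$$ $$\pi_U(S_1,n_1,m_1,\ldots,n_{J-1},m_{J-1},S_J)=B^s\prod_{\ell=1}^{J-1}\binom{n_\ell+m_\ell}{n_\ell}\alpha_{(\ell)}^{n_\ell}\beta_{\{S_{\ell+1},\ldots,S_J\}}^{m_\ell},$$ $$\pi_X(S_1,n_1,\ldots,n_{J-1},S_J)=B^s\prod_{\ell=1}^{J-1}\frac{\alpha_{(\ell)}^{n_\ell}}{\beta_{\{S_1,\ldots,S_\ell\}}^{n_\ell+1}},\qquad \pi_Y(S_1,m_1,\ldots,m_{J-1},S_J)=B^s\prod_{\ell=1}^{J-1}\frac{\beta_{\{S_{\ell+1},\ldots,S_J\}}^{m_\ell}}{\alpha_{\mathcal{C}(\{S_{\ell+1},\ldots,S_J\})}^{m_\ell+1}},$$ $$\pi_V(S_1,r_1,\ldots,r_{J-1},S_J)=B^s\prod_{\ell=1}^{J-1}\big(\alpha_{(\ell)}+\beta_{\{S_{\ell+1},\ldots,S_J\}}\big)^{r_\ell},\qquad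 \pi_R(S_1,\ldots,S_J)=B^s\prod_{\ell=1}^{J-1}\big(\beta_{\{S_1,\ldots,S_\ell\}}-\alpha_{(\ell)}\big)^{-1}.$$
   Context: Setting: finite type sets $\mathcal{C}=\{c_1,\ldots,c_I\}$, $\mathcal{S}=\{s_1,\ldots,s_J\}$, connected bipartite compatibility graph $G=(\mathcal{C},\mathcal{S},\mathcal{E})$, independent i.i.d. sequences $(c^m)_{m\in\mathbb{Z}}\sim\alpha$, $(s^n)_{n\in\mathbb{Z}}\sim\beta$ with positive probabilities. Notation: $\mathcal{C}(S)$ = customer types compatible with some type in $S$; $\mathcal{U}(S)=\mathcal{C}\setminus\mathcal{C}(\mathcal{S}\setminus S)$; $\alpha_C=\sum_{c\in C}\alpha_c$, $\beta_S=\sum_{s\in S}\beta_s$. Complete resource pooling: $\beta_S>\alpha_{\mathcal{U}(S)}$ for all nonempty proper $S\subsetneq\mathcal{S}$. $A$ is the a.s. unique (perfect) FCFS matching over $\mathbb{Z}$ (for each $(m,n)\in A$, every compatible $s^l$, $l<n$, is matched to some $c^k$, $k<m$, and every compatible $c^k$, $k<m$, to some $s^l$, $l<n$); for $(m,n)\in A$, $\tilde{s}^m=s^n$. At time $N$ customer-line position $m$ holds $\tilde{s}^m$ if $c^m$ is matched to a server of index $\le N$ (''exchanged server'') and $c^m$ otherwise (''unmatched customer''). $\underline{M}$ = first position with an unmatched customer, $\overline{M}$ = last position with an exchanged server, $\underline{N}$ = largest $p\le\overline{M}$ such that positions $p,\ldots,\overline{M}$ contain exchanged servers of all $J$ types.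 $\mathcal{Z}_N$ is the word in positions $\underline{N},\ldots,\overline{M}$; it has stationary distribution $\pi_{\mathcal{Z}}(\mathfrak{z})=B\prod_i\alpha_{c_i}^{\#c_i}\prod_j\beta_{s_j}^{\#s_j}$ for a constant $B>0$ (counts of types in $\mathfrak{z}$). Write $\mathcal{Z}_N=(S_1,\mathfrak{w}_1,S_2,\ldots,\mathfrak{w}_{J-1},S_J)$: $S_J$ is the type of the last entry $\tilde{s}^{\overline{M}}$, and recursively, for $j<J$, $S_j$ is the type of the last exchanged server in the word whose type differs from $S_{j+1},\ldots,S_J$; $\mathfrak{w}_\ell$ is the subword strictly between the occurrences of $S_\ell$ and $S_{\ell+1}$. $W_N=(S_1,w_1,\ldots,w_{J-1},S_J)$ where $w_\ell$ replaces each unmatched customer of $\mathfrak{w}_\ell$ by $0$ and each exchanged server by $1$; $\#0(w)$, $\#1(w)$ count zeros and ones. $X_N=(S_1,n_1,\ldots,n_{J-1},S_J)$ with $n_\ell=\#0(w_\ell)$; $Y_N=(S_1,m_1,\ldots,m_{J-1},S_J)$ with $m_\ell=\#1(w_\ell)$; $U_N=(S_1,n_1,m_1,\ldots,n_{J-1},m_{J-1},S_J)$; $V_N=(S_1,n_1+m_1,\ldots,n_{J-1}+m_{J-1},S_J)$; $R_N=(S_1,\ldots,S_J)$. *)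

(* Defs.v *)
From Stdlib Require Import Reals List Arith Permutation Relations Binomial.
Import ListNotations.
Open Scope R_scope.

(* Customer types are c_i, i < I (encoded by i); server types are s_j, j < J
   (encoded by j).  The compatibility graph is given by E : nat -> nat -> bool,
   E i j = true iff (c_i, s_j) is an edge. *)

Definition sumR (l : list R) : R := fold_right Rplus 0 l.
Definition prodR (l : list R) : R := fold_right Rmult 1 l.

Definition memb (j : nat) (S : list nat) : bool := existsb (Nat.eqb j) S.

Definition Cb (E : nat -> nat -> bool) (S : list nat) (i : nat) : bool :=
  existsb (fun j => E i j) S.

(* U(S) = C \ C(S \ S): customer types compatible with no server type outside S *)
Definition Ub (E : nat -> nat -> bool) (J : nat) (S : list nat) (i : nat) : bool :=
  negb (existsb (fun j => andb (E i j) (negb (memb j S))) (seq 0 J)).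

(* alpha_C for a (boolean) set C of customer types, beta_S for a set S of server types *)
Definition alpha_of (I : nat) (alpha : nat -> R) (P : nat -> bool) : R :=
  sumR (map (fun i => if P i then alpha i else 0) (seq 0 I)).
Definition beta_of (J : nat) (beta : nat -> R) (S : list nat) : R :=
  sumR (map (fun j => if memb j S then beta j else 0) (seq 0 J)).

Definition vertex := (nat + nat)%type. (* inl i = c_i, inr j = s_j *)

Definition adj (I J : nat) (E : nat -> nat -> bool) (u v : vertex) : Prop :=
  match u, v with
  | inl i, inr j => (i < I)%nat /\ (j < J)%nat /\ E i j = true
  | inr j, inl i => (i < I)%nat /\ (j < J)%nat /\ E i j = true
  | _, _ => False
  end.

Definition is_vertex (I J : nat) (u : vertex) : Prop :=
  match u with inl i => (i < I)%nat | inr j => (j < J)%nat end.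

Definition connected_graph (I J : nat) (E : nat -> nat -> bool) : Prop :=
  forall u v, is_vertex I J u -> is_vertex I J v ->
    clos_refl_trans vertex (adj I J E) u v.

Definition prob_vector (n : nat) (p : nat -> R) : Prop :=
  (forall k, (k < n)%nat -> 0 < p k) /\ sumR (map p (seq 0 n)) = 1.

Definition CRP (I J : nat) (E : nat -> nat -> bool) (alpha beta : nat -> R) : Prop :=
  forall S : list nat,
    (forall j, In j S -> (j < J)%nat) ->
    (exists j, In j S) ->
    (exists j, (j < J)%nat /\ ~ In j S) ->
    beta_of J beta S > alpha_of I alpha (Ub E J S).

Inductive letter : Type :=
| Cust (i : nat)   (* an unmatched customer of type c_i *)
| Serv (j : nat).  (* an exchanged server of type s_j *)

(* A word Z = (S_1, w_1, S_2, ..., w_{J-1}, S_J) is stored as the pair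
   (list [S_1;...;S_J], list [w_1;...;w_{J-1}]). *)
Definition Zstate := (list nat * list (list letter))%type.

Fixpoint interleave (p : list nat) (ws : list (list letter)) : list letter :=
  match p with
  | [] => []
  | s :: p' => match ws with
               | [] => Serv s :: interleave p' []
               | w :: ws' => Serv s :: w ++ interleave p' ws'
               end
  end.
Definition flatZ (z : Zstate) : list letter := interleave (fst z) (snd z).

(* letter allowed in subword w_l (l = k+1): an unmatched customer of a type in
   U({S_1..S_l}) or an exchanged server of a type in {S_{l+1}..S_J}. *)
Definition letter_ok (I J : nat) (E : nat -> nat -> bool) (p : list nat) (l : nat)
  (x : letter) : Prop :=
  match x with
  | Cust i => (i < I)%nat /\ Ub E J (firstn l p) i = true
  | Serv j => In j (skipn l p)
  end.

Definition valid_Z (I J : nat) (E : nat -> nat -> bool) (z : Zstate) : Prop :=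
  Permutation (fst z) (seq 0 J) /\ length (snd z) = (J - 1)%nat /\
  forall k, (k < J - 1)%nat ->
    Forall (letter_ok I J E (fst z) (S k)) (nth k (snd z) []).

Definition is_cust (i : nat) (x : letter) : bool :=
  match x with Cust i' => Nat.eqb i i' | _ => false end.
Definition is_serv (j : nat) (x : letter) : bool :=
  match x with Serv j' => Nat.eqb j j' | _ => false end.

Definition cnt (f : letter -> bool) (l : list letter) : nat := length (filter f l).

Definition piZ (I J : nat) (alpha beta : nat -> R) (B : R) (z : Zstate) : R :=
  B * prodR (map (fun i => alpha i ^ cnt (is_cust i) (flatZ z)) (seq 0 I))
    * prodR (map (fun j => beta j ^ cnt (is_serv j) (flatZ z)) (seq 0 J)).

Definition bit (x : letter) : bool := match x with Cust _ => false | Serv _ => true end.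
Definition isC (x : letter) : bool := negb (bit x).
Definition isS (x : letter) : bool := bit x.

(* binary words: false = 0 (unmatched customer), true = 1 (exchanged server) *)
Definition n0 (w : list bool) : nat := length (filter negb w).
Definition n1 (w : list bool) : nat := length (filter (fun b => b) w).

Definition Wmap (z : Zstate) : list nat * list (list bool) :=
  (fst z, map (map bit) (snd z)).
Definition Umap (z : Zstate) : list nat * list (nat * nat) :=
  (fst z, map (fun w => (cnt isC w, cnt isS w)) (snd z)).
Definition Xmap (z : Zstate) : list nat * list nat := (fst z, map (cnt isC) (snd z)).
Definition Ymap (z : Zstate) : list nat * list nat := (fst z, map (cnt isS) (snd z)).
Definition Vmap (z : Zstate) : list nat * list nat :=
  (fst z, map (fun w => (cnt isC w + cnt isS w)%nat) (snd z)).
Definition Rmap (z : Zstate) : list nat := fst z.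

Definition nn_sum_on {T : Type} (P : T -> Prop) (f : T -> R) (L : R) : Prop :=
  is_lub (fun s => exists l : list T, NoDup l /\ Forall P l /\ s = sumR (map f l)) L.

(* ---------- the quantities of the theorem (l is 1-based, p = [S_1;...;S_J]) ---------- *)
Definition prod_l (J : nat) (f : nat -> R) : R := prodR (map f (seq 1 (J - 1))).
Definition aL (I J : nat) (E : nat -> nat -> bool) (alpha : nat -> R) (p : list nat) (l : nat) : R :=
  alpha_of I alpha (Ub E J (firstn l p)).
Definition bLater (J : nat) (beta : nat -> R) (p : list nat) (l : nat) : R :=
  beta_of J beta (skipn l p).
Definition bFirst (J : nat) (beta : nat -> R) (p : list nat) (l : nat) : R :=
  beta_of J beta (firstn l p).
Definition aCLater (I : nat) (E : nat -> nat -> bool) (alpha : nat -> R) (p : list nat) (l : nat) : R :=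
  alpha_of I alpha (Cb E (skipn l p)).
Definition Bs (J : nat) (beta : nat -> R) (B : R) : R := B * prodR (map beta (seq 0 J)).

Definition piW I J E alpha beta B (p : list nat) (ws : list (list bool)) : R :=
  Bs J beta B * prod_l J (fun l =>
    aL I J E alpha p l ^ n0 (nth (l - 1) ws []) * bLater J beta p l ^ n1 (nth (l - 1) ws [])).

Definition piU I J E alpha beta B (p : list nat) (nm : list (nat * nat)) : R :=
  Bs J beta B * prod_l J (fun l =>
    let n := fst (nth (l - 1) nm (0, 0)%nat) in
    let m := snd (nth (l - 1) nm (0, 0)%nat) in
    Binomial.C (n + m) n * aL I J E alpha p l ^ n * bLater J beta p l ^ m).

Definition piX I J E alpha beta B (p : list nat) (ns : list nat) : R :=
  Bs J beta B * prod_l J (fun l =>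
    let n := nth (l - 1) ns 0%nat in
    aL I J E alpha p l ^ n / bFirst J beta p l ^ (n + 1)).

Definition piY I J E alpha beta B (p : list nat) (ms : list nat) : R :=
  Bs J beta B * prod_l J (fun l =>
    let m := nth (l - 1) ms 0%nat in
    bLater J beta p l ^ m / aCLater I E alpha p l ^ (m + 1)).

Definition piV I J E alpha beta B (p : list nat) (rs : list nat) : R :=
  Bs J beta B * prod_l J (fun l =>
    (aL I J E alpha p l + bLater J beta p l) ^ nth (l - 1) rs 0%nat).

Definition piR I J E alpha beta B (p : list nat) : R :=
  Bs J beta B * prod_l J (fun l => / (bFirst J beta p l - aL I J E alpha p l)).

(* Main.v *)
Require Import Defs.
From Stdlib Require Import Reals List Arith Permutation Binomial Lia Lra ClassicalEpsilon Relations Bool.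
Import ListNotations.
Open Scope R_scope.

Lemma sumR_app l1 l2 : sumR (l1 ++ l2) = sumR l1 + sumR l2.
Proof. induction l1; simpl; [lra|rewrite IHl1; lra]. Qed.

Lemma prodR_app l1 l2 : prodR (l1 ++ l2) = prodR l1 * prodR l2.
Proof. induction l1; simpl; [lra|rewrite IHl1; lra]. Qed.

Lemma sumR_perm l1 l2 : Permutation l1 l2 -> sumR l1 = sumR l2.
Proof. induction 1; simpl; lra. Qed.

Lemma prodR_perm l1 l2 : Permutation l1 l2 -> prodR l1 = prodR l2.
Proof. induction 1; simpl; try lra. rewrite IHPermutation; lra. Qed.

Lemma sumR_scal {T} (c : R) (f : T -> R) l :
  sumR (map (fun x => c * f x) l) = c * sumR (map f l).
Proof. induction l; simpl; [lra|rewrite IHl; lra]. Qed.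

Lemma sumR_flat_map {A T} (f : T -> R) (g : A -> list T) l :
  sumR (map f (flat_map g l)) = sumR (map (fun x => sumR (map f (g x))) l).
Proof. induction l; simpl; [lra|]. rewrite map_app, sumR_app, IHl; lra. Qed.

Lemma sumR_filter {T} (P : T -> bool) (f : T -> R) l :
  sumR (map f (filter P l)) = sumR (map (fun x => if P x then f x else 0) l).
Proof. induction l; simpl; [lra|]. destruct (P a); simpl; rewrite IHl; lra. Qed.

Lemma sumR_nonneg l : (forall x, In x l -> 0 <= x) -> 0 <= sumR l.
Proof. induction l; simpl; intros; [lra|].
  assert (0 <= a) by auto. assert (0 <= sumR l) by auto. lra. Qed.

Lemma prodR_pos l : (forall x, In x l -> 0 < x) -> 0 < prodR l.
Proof. induction l; simpl; intros; [lra|].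
  apply Rmult_lt_0_compat; auto. Qed.

Lemma prodR_nonneg l : (forall x, In x l -> 0 <= x) -> 0 <= prodR l.
Proof. induction l; simpl; intros; [lra|].
  apply Rmult_le_pos; auto. Qed.

Lemma sum_incl {T} (f : T -> R) (l1 : list T) : forall l2,
  NoDup l1 -> incl l1 l2 -> (forall x, In x l2 -> 0 <= f x) ->
  sumR (map f l1) <= sumR (map f l2).
Proof.
  induction l1 as [|a l1 IH]; intros l2 Hnd Hinc Hpos; simpl.
  - apply sumR_nonneg. intros x Hx. apply in_map_iff in Hx as [y [<- Hy]]. auto.
  - inversion Hnd; subst.
    assert (Ha : In a l2) by (apply Hinc; left; auto).
    apply in_split in Ha as [la [lb ->]].
    rewrite map_app, sumR_app. simpl.
    assert (sumR (map f l1) <= sumR (map f (la ++ lb))).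
    { apply IH; auto.
      - intros x Hx. assert (In x (la ++ a :: lb)) by (apply Hinc; right; auto).
        apply in_app_or in H. apply in_or_app. destruct H as [H|[H|H]]; auto.
        subst; contradiction.
      - intros x Hx. apply Hpos. apply in_app_or in Hx. apply in_or_app.
        destruct Hx; [left|right;right]; auto. }
    rewrite map_app, sumR_app in H. lra.
Qed.

Lemma exhaust {T} (P : T -> Prop) (f : T -> R) (L : R) (l : nat -> list T) :
  (forall x, P x -> 0 <= f x) ->
  (forall n, NoDup (l n)) -> (forall n x, In x (l n) -> P x) ->
  (forall x, P x -> exists n, In x (l n)) ->
  (forall n x, In x (l n) -> In x (l (S n))) ->
  Un_cv (fun n => sumR (map f (l n))) L -> nn_sum_on P f L.
Proof.
  intros Hpos Hnd HP Hex Hmono Hcv.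
  assert (Hmon : forall n m, (n <= m)%nat -> incl (l n) (l m)).
  { intros n m Hnm. induction Hnm; intros x Hx; auto. }
  assert (Hgr : Un_growing (fun n => sumR (map f (l n)))).
  { intros n. apply sum_incl; auto. intros x Hx. apply Hpos. eapply HP; eauto. }
  split.
  - intros s [l0 [Hnd0 [HF ->]]].
    assert (HN : exists N, incl l0 (l N)).
    { clear Hnd0. induction l0 as [|a l0 IH].
      - exists 0%nat. intros x [].
      - inversion HF; subst. destruct (IH H2) as [N HN].
        destruct (Hex a H1) as [na Hna].
        exists (Nat.max N na). intros x [<-|Hx].
        + apply (Hmon na); [lia|auto].
        + apply (Hmon N); [lia|auto]. }
    destruct HN as [N HN].
    apply Rle_trans with (sumR (map f (l N))).
    + apply sum_incl; auto. intros x Hx. apply Hpos. eapply HP; eauto.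
    + apply (growing_ineq _ _ Hgr Hcv).
  - intros M HM.
    assert (Hb : forall n, sumR (map f (l n)) <= M).
    { intros n. apply HM. exists (l n). split; auto. split; auto.
      apply Forall_forall. intros; eapply HP; eauto. }
    destruct (Rle_dec L M) as [|Hn]; auto.
    exfalso. destruct (Hcv (L - M)) as [N HN]; [lra|].
    specialize (HN N (le_n _)). specialize (Hb N). unfold R_dist in HN.
    apply Rabs_def2 in HN. lra.
Qed.

Definition indP (P : Prop) : R := if excluded_middle_informative P then 1 else 0.

Fixpoint Gf (a b : R) (k : nat) (Q : list bool -> Prop) : R :=
  match k with
  | O => indP (Q [])
  | S k => indP (Q []) + a * Gf a b k (fun w => Q (false :: w)) + b * Gf a b k (fun w => Q (true :: w))
  end.

Lemma ind_ext P P' : (P <-> P') -> indP P = indP P'.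
Proof. intros H. unfold indP. destruct (excluded_middle_informative P), (excluded_middle_informative P'); tauto. Qed.
Lemma ind_T (P : Prop) : P -> indP P = 1.
Proof. intros. unfold indP; destruct excluded_middle_informative; tauto. Qed.
Lemma ind_F (P : Prop) : ~ P -> indP P = 0.
Proof. intros. unfold indP; destruct excluded_middle_informative; tauto. Qed.
Lemma ind_nonneg P : 0 <= indP P.
Proof. unfold indP; destruct excluded_middle_informative; lra. Qed.
Lemma ind_le1 P : indP P <= 1.
Proof. unfold indP; destruct excluded_middle_informative; lra. Qed.

Lemma Gf_ext a b k : forall Q Q', (forall w, Q w <-> Q' w) -> Gf a b k Q = Gf a b k Q'.
Proof. induction k; intros Q Q' H; simpl.
  - apply ind_ext; auto.
  - rewrite (ind_ext _ _ (H [])).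
    rewrite (IHk (fun w => Q (false :: w)) (fun w => Q' (false :: w))) by (intros; apply H).
    rewrite (IHk (fun w => Q (true :: w)) (fun w => Q' (true :: w))) by (intros; apply H).
    reflexivity. Qed.

Lemma Gf_False a b k : Gf a b k (fun _ => False) = 0.
Proof. induction k; simpl; rewrite ?ind_F by tauto; [lra|]. rewrite IHk; lra. Qed.

Lemma Gf_nonneg a b k : 0 <= a -> 0 <= b -> forall Q, 0 <= Gf a b k Q.
Proof. intros Ha Hb. induction k; intros Q; simpl; pose proof (ind_nonneg (Q [])); [lra|].
  pose proof (IHk (fun w => Q (false :: w))). pose proof (IHk (fun w => Q (true :: w))).
  pose proof (Rmult_le_pos _ _ Ha H0). pose proof (Rmult_le_pos _ _ Hb H1). lra. Qed.

Lemma Gf_mono a b k : 0 <= a -> 0 <= b -> forall Q, Gf a b k Q <= Gf a b (S k) Q.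
Proof. intros Ha Hb. induction k; intros Q.
  - simpl. pose proof (Gf_nonneg a b 0 Ha Hb (fun w => Q (false :: w))).
    pose proof (Gf_nonneg a b 0 Ha Hb (fun w => Q (true :: w))). simpl in *.
    pose proof (Rmult_le_pos _ _ Ha H). pose proof (Rmult_le_pos _ _ Hb H0). lra.
  - change (Gf a b (S (S k)) Q) with
      (indP (Q []) + a * Gf a b (S k) (fun w => Q (false :: w)) + b * Gf a b (S k) (fun w => Q (true :: w))).
    change (Gf a b (S k) Q) with
      (indP (Q []) + a * Gf a b k (fun w => Q (false :: w)) + b * Gf a b k (fun w => Q (true :: w))).
    pose proof (IHk (fun w => Q (false :: w))). pose proof (IHk (fun w => Q (true :: w))).
    pose proof (Rmult_le_compat_l _ _ _ Ha H). pose proof (Rmult_le_compat_l _ _ _ Hb H0). lra.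
Qed.

Lemma Gf_swap a b k : forall Q, Gf a b k Q = Gf b a k (fun w => Q (map negb w)).
Proof. induction k; intros Q; simpl; [reflexivity|].
  rewrite IHk, IHk. simpl. lra. Qed.

Definition n0b (w : list bool) : nat := length (filter negb w).
Definition n1b (w : list bool) : nat := length (filter (fun b => b) w).

Lemma cv_ev {u : nat -> R} {t : R} (N : nat) : (forall k, (N <= k)%nat -> u k = t) -> Un_cv u t.
Proof. intros H eps He. exists N. intros n Hn. rewrite H by lia. unfold R_dist.
  rewrite Rminus_diag, Rabs_R0. lra. Qed.

Fixpoint pw (a b : R) (bs : list bool) : R :=
  match bs with [] => 1 | c :: bs => (if c then b else a) * pw a b bs end.

Lemma Gf_pat a b bs : forall k, (length bs <= k)%nat -> Gf a b k (fun w => w = bs) = pw a b bs.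
Proof. induction bs as [|c bs IH]; intros k Hk.
  - destruct k; simpl; rewrite ind_T by auto; [lra|].
    rewrite (Gf_ext _ _ _ _ (fun _ => False)) by (intros; split; [discriminate|tauto]).
    rewrite (Gf_ext _ _ _ (fun w => true :: w = []) (fun _ => False)) by (intros; split; [discriminate|tauto]).
    rewrite !Gf_False. lra.
  - destruct k as [|k]; simpl in Hk; [lia|]. simpl.
    rewrite ind_F by discriminate.
    destruct c.
    + rewrite (Gf_ext _ _ _ (fun w => false :: w = true :: bs) (fun _ => False)) by (intros; split; [discriminate|tauto]).
      rewrite (Gf_ext _ _ _ (fun w => true :: w = true :: bs) (fun w => w = bs)) by (intros; split; [intros H; inversion H; auto|intros ->; auto]).
      rewrite Gf_False, IH by lia. lra.
    + rewrite (Gf_ext _ _ _ (fun w => true :: w = false :: bs) (fun _ => False)) by (intros; split; [discriminate|tauto]).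
      rewrite (Gf_ext _ _ _ (fun w => false :: w = false :: bs) (fun w => w = bs)) by (intros; split; [intros H; inversion H; auto|intros ->; auto]).
      rewrite Gf_False, IH by lia. lra.
Qed.

Lemma pw_eq a b bs : pw a b bs = a ^ n0b bs * b ^ n1b bs.
Proof. induction bs as [|c bs IH]; simpl; [lra|]. unfold n0b, n1b in *. destruct c; simpl; rewrite IH; ring. Qed.

Lemma Gf_len a b r : forall k, (r <= k)%nat -> Gf a b k (fun w => length w = r) = (a + b) ^ r.
Proof. induction r as [|r IH]; intros k Hk.
  - destruct k; simpl; rewrite ind_T by auto; [lra|].
    rewrite !(Gf_ext _ _ _ _ (fun _ => False)) by (intros; simpl; split; [discriminate|tauto]).
    rewrite !Gf_False. lra.
  - destruct k as [|k]; [lia|]. simpl. rewrite ind_F by discriminate.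
    rewrite !(Gf_ext _ _ _ _ (fun w => length w = r)) by (intros; simpl; lia).
    rewrite IH by lia. ring.
Qed.

Ltac solve_iff := intros; unfold n0b, n1b; simpl; split; intros;
  repeat match goal with H: _ /\ _ |- _ => destruct H end; try contradiction; try split; lia.

Lemma C_n0 n : C n 0 = 1.
Proof. unfold C. rewrite Nat.sub_0_r. simpl. field. apply INR_fact_neq_0. Qed.
Lemma C_nn n : C n n = 1.
Proof. unfold C. rewrite Nat.sub_diag. simpl. field. apply INR_fact_neq_0. Qed.

Lemma Gf_cnt a b N : forall n m k, (n + m = N)%nat -> (N <= k)%nat ->
  Gf a b k (fun w => n0b w = n /\ n1b w = m) = C (n + m) n * a ^ n * b ^ m.
Proof.
  induction N as [|N IH]; intros n m k Hnm Hk.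
  - assert (n = 0%nat) by lia. assert (m = 0%nat) by lia. subst. rewrite C_n0.
    destruct k; simpl; rewrite ind_T by (split; reflexivity); [lra|].
    rewrite (Gf_ext _ _ _ (fun w => n0b (false::w) = _ /\ _) (fun _ => False)) by solve_iff.
    rewrite (Gf_ext _ _ _ (fun w => n0b (true::w) = _ /\ _) (fun _ => False)) by solve_iff.
    rewrite !Gf_False. lra.
  - destruct k as [|k]; [lia|]. simpl.
    rewrite ind_F by (unfold n0b, n1b; simpl; intros [? ?]; lia).
    destruct n as [|n'], m as [|m']; [lia| | |].
    + rewrite (Gf_ext _ _ _ (fun w => n0b (false::w) = _ /\ _) (fun _ => False)) by solve_iff.
      rewrite (Gf_ext _ _ _ (fun w => n0b (true :: w) = 0%nat /\ n1b (true :: w) = S m')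
                 (fun w => n0b w = 0%nat /\ n1b w = m')) by solve_iff.
      rewrite Gf_False, IH by lia. rewrite !C_n0. simpl. ring.
    + rewrite (Gf_ext _ _ _ (fun w => n0b (true :: w) = _ /\ _) (fun _ => False)) by solve_iff.
      rewrite (Gf_ext _ _ _ (fun w => n0b (false :: w) = S n' /\ n1b (false :: w) = 0%nat)
                 (fun w => n0b w = n' /\ n1b w = 0%nat)) by solve_iff.
      rewrite Gf_False, IH by lia. rewrite !Nat.add_0_r, !C_nn. simpl. ring.
    + rewrite (Gf_ext _ _ _ (fun w => n0b (false :: w) = S n' /\ n1b (false :: w) = S m')
                 (fun w => n0b w = n' /\ n1b w = S m')) by solve_iff.
      rewrite (Gf_ext _ _ _ (fun w => n0b (true :: w) = S n' /\ n1b (true :: w) = S m')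
                 (fun w => n0b w = S n' /\ n1b w = m')) by solve_iff.
      rewrite !IH by lia.
      replace (S n' + S m')%nat with (S (n' + S m')) by lia.
      rewrite <- pascal by lia.
      replace (S n' + m')%nat with (n' + S m')%nat by lia.
      simpl. ring.
Qed.

Lemma cv_shift (u : nat -> R) L : Un_cv u L -> Un_cv (fun k => u (S k)) L.
Proof. intros H eps He. destruct (H eps He) as [N HN]. exists N. intros n Hn. apply HN. lia. Qed.

Lemma cv_const (c : R) : Un_cv (fun _ => c) c.
Proof. intros eps He. exists 0%nat. intros. unfold R_dist. rewrite Rminus_diag, Rabs_R0. lra. Qed.

Lemma mono_limit (u e : nat -> R) (t c d el : R) :
  Un_growing u -> (forall k, u k <= t) -> (forall k, u (S k) = c + d * u k + e k) ->
  Un_cv e el -> 0 <= d < 1 -> t = c + d * t + el -> Un_cv u t.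
Proof.
  intros Hg Hb Hr He Hd Ht.
  destruct (growing_cv u Hg) as [L HL]. { exists t. intros x [k ->]. auto. }
  assert (H1 : Un_cv (fun k => u (S k)) L) by (apply cv_shift; auto).
  assert (H2 : Un_cv (fun k => u (S k)) (c + d * L + el)).
  { apply (Un_cv_ext (fun k => c + d * u k + e k)). { intros; rewrite Hr; auto. }
    apply CV_plus; auto. apply CV_plus. apply cv_const. apply CV_mult; auto. apply cv_const. }
  pose proof (UL_sequence _ _ _ H1 H2).
  assert (L = t).
  { assert ((1 - d) * L = (1 - d) * t) by lra.
    apply Rmult_eq_reg_l in H0; lra. }
  subst; auto.
Qed.

Definition tX a b n := a ^ n / (1 - b) ^ (S n).

Lemma tX_rec a b n : b < 1 -> tX a b (S n) = a * tX a b n + b * tX a b (S n).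
Proof. intros Hb. unfold tX. assert (1 - b <> 0) by lra.
  assert ((1-b)^ n <> 0) by (apply pow_nonzero; auto).
  simpl. field. auto. Qed.
Lemma tX_0 a b : b < 1 -> tX a b 0 = 1 + b * tX a b 0.
Proof. intros Hb. unfold tX. simpl. field. lra. Qed.
Lemma tX_nonneg a b n : 0 <= a -> b < 1 -> 0 <= tX a b n.
Proof. intros. unfold tX. apply Rmult_le_pos. apply pow_le; auto.
  apply Rlt_le, Rinv_0_lt_compat, pow_lt; lra. Qed.

Lemma GX_rec0 a b k : Gf a b (S k) (fun w => n0b w = 0%nat) = 1 + b * Gf a b k (fun w => n0b w = 0%nat).
Proof. simpl. rewrite ind_T by reflexivity.
  rewrite (Gf_ext _ _ _ (fun w => n0b (false :: w) = 0%nat) (fun _ => False)) by solve_iff.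
  rewrite (Gf_ext _ _ _ (fun w => n0b (true :: w) = 0%nat) (fun w => n0b w = 0%nat)) by solve_iff.
  rewrite Gf_False. ring. Qed.
Lemma GX_recS a b k n : Gf a b (S k) (fun w => n0b w = S n) =
   a * Gf a b k (fun w => n0b w = n) + b * Gf a b k (fun w => n0b w = S n).
Proof. simpl. rewrite ind_F by (unfold n0b; simpl; lia).
  rewrite (Gf_ext _ _ _ (fun w => n0b (false :: w) = S n) (fun w => n0b w = n)) by solve_iff.
  rewrite (Gf_ext _ _ _ (fun w => n0b (true :: w) = S n) (fun w => n0b w = S n)) by solve_iff.
  ring. Qed.

Lemma GX_bound a b k : 0 <= a -> 0 <= b < 1 -> forall n, Gf a b k (fun w => n0b w = n) <= tX a b n.
Proof. intros Ha Hb. induction k; intros n.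
  - simpl. destruct n.
    + rewrite ind_T by reflexivity. rewrite tX_0 by lra.
      pose proof (tX_nonneg a b 0 Ha ltac:(lra)). pose proof (Rmult_le_pos b _ ltac:(lra) H). lra.
    + rewrite ind_F by (unfold n0b; simpl; lia). apply tX_nonneg; lra.
  - destruct n.
    + rewrite GX_rec0, tX_0 by lra. pose proof (IHk 0%nat).
      pose proof (Rmult_le_compat_l b _ _ ltac:(lra) H). lra.
    + rewrite GX_recS, tX_rec by lra. pose proof (IHk n). pose proof (IHk (S n)).
      pose proof (Rmult_le_compat_l b _ _ ltac:(lra) H0).
      pose proof (Rmult_le_compat_l a _ _ ltac:(lra) H). lra.
Qed.

Lemma GX_cv a b n : 0 <= a -> 0 <= b < 1 -> Un_cv (fun k => Gf a b k (fun w => n0b w = n)) (tX a b n).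
Proof. intros Ha Hb. induction n.
  - apply (mono_limit _ (fun _ => 0) _ 1 b 0).
    + intros k. apply Gf_mono; lra.
    + intros; apply GX_bound; lra.
    + intros k. rewrite GX_rec0. ring.
    + apply cv_const.
    + lra.
    + rewrite tX_0 at 1 by lra. ring.
  - apply (mono_limit _ (fun k => a * Gf a b k (fun w => n0b w = n)) _ 0 b (a * tX a b n)).
    + intros k. apply Gf_mono; lra.
    + intros; apply GX_bound; lra.
    + intros k. rewrite GX_recS. ring.
    + apply CV_mult; auto. apply cv_const.
    + lra.
    + rewrite tX_rec at 1 by lra. ring.
Qed.

Lemma GY_cv a b m : 0 <= b -> 0 <= a < 1 ->
  Un_cv (fun k => Gf a b k (fun w => n1b w = m)) (b ^ m / (1 - a) ^ (S m)).
Proof. intros. apply (Un_cv_ext (fun k => Gf b a k (fun w => n0b w = m))).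
  - intros k. rewrite Gf_swap. symmetry. apply Gf_ext. intros w.
    assert (n0b (map negb w) = n1b w).
    { unfold n1b, n0b. induction w; simpl; auto. destruct a0; simpl; auto. }
    rewrite H1. tauto.
  - apply GX_cv; auto.
Qed.

Lemma GR_cv a b : 0 <= a -> 0 <= b -> a + b < 1 ->
  Un_cv (fun k => Gf a b k (fun _ => True)) (/ (1 - a - b)).
Proof. intros Ha Hb Hab.
  assert (Hr : forall k, Gf a b (S k) (fun _ => True) = 1 + (a + b) * Gf a b k (fun _ => True)).
  { intros k. simpl. rewrite ind_T by auto. ring. }
  assert (Ht : / (1 - a - b) = 1 + (a + b) * / (1 - a - b)) by (field; lra).
  assert (0 < / (1 - a - b)) by (apply Rinv_0_lt_compat; lra).
  apply (mono_limit _ (fun _ => 0) _ 1 (a + b) 0).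
  - intros k. apply Gf_mono; lra.
  - induction k.
    + simpl. rewrite ind_T by auto. rewrite Ht. pose proof (Rmult_le_pos (a+b) _ ltac:(lra) (Rlt_le _ _ H)). lra.
    + rewrite Hr. rewrite Ht. pose proof (Rmult_le_compat_l (a+b) _ _ ltac:(lra) IHk). lra.
  - intros k. rewrite Hr. ring.
  - apply cv_const.
  - lra.
  - rewrite Ht at 1. ring.
Qed.

Lemma NoDup_fm_cons {A} (l : list A) (L : list (list A)) :
  NoDup l -> NoDup L -> NoDup (flat_map (fun x => map (cons x) L) l).
Proof. induction l as [|a l IH]; intros Hl HL; simpl; [constructor|].
  inversion Hl; subst. apply NoDup_app; auto.
  - apply FinFun.Injective_map_NoDup; auto. intros u v H; inversion H; auto.
  - intros w Hw Hw'. apply in_map_iff in Hw as [u [<- _]].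
    apply in_flat_map in Hw' as [y [Hy Hy']]. apply in_map_iff in Hy' as [v [Hv _]].
    inversion Hv; subst. contradiction.
Qed.

Fixpoint words_le {A} (alph : list A) (k : nat) : list (list A) :=
  match k with O => [[]] | S k => [] :: flat_map (fun x => map (cons x) (words_le alph k)) alph end.

Lemma words_le_in {A} (alph : list A) k : forall w,
  In w (words_le alph k) <-> (length w <= k)%nat /\ (forall x, In x w -> In x alph).
Proof. induction k; intros w; simpl; split.
  - intros [<-|[]]. simpl; split; [lia|tauto].
  - intros [H _]. destruct w; simpl in H; [auto|lia].
  - intros [<-|H]. simpl; split; [lia|tauto].
    apply in_flat_map in H as [x [Hx H]]. apply in_map_iff in H as [v [<- Hv]].
    apply IHk in Hv as [H1 H2]. simpl. split; [lia|]. intros y [<-|Hy]; auto.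
  - intros [H1 H2]. destruct w as [|x w]; [auto|right].
    apply in_flat_map. exists x. split; [apply H2; left; auto|].
    apply in_map. apply IHk. simpl in H1. split; [lia|]. intros; apply H2; right; auto.
Qed.

Lemma words_le_nodup {A} (alph : list A) k : NoDup alph -> NoDup (words_le alph k).
Proof. intros H. induction k; simpl. constructor; [tauto|constructor].
  constructor; [|apply NoDup_fm_cons; auto].
  intros Hin. apply in_flat_map in Hin as [x [_ Hx]]. apply in_map_iff in Hx as [v [Hv _]]. discriminate.
Qed.

Definition lw (alpha beta : nat -> R) (x : letter) : R :=
  match x with Cust i => alpha i | Serv j => beta j end.
Definition wt alpha beta (w : list letter) : R := prodR (map (lw alpha beta) w).
Definition decb (P : Prop) : bool := if excluded_middle_informative P then true else false.

Lemma sumR_scal_r {T} (c : R) (f : T -> R) l :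
  sumR (map (fun x => f x * c) l) = sumR (map f l) * c.
Proof. induction l; simpl; [lra|rewrite IHl; lra]. Qed.

Lemma level_sum alpha beta (CL SL : list letter) a b :
  (forall x, In x CL -> bit x = false) -> (forall x, In x SL -> bit x = true) ->
  sumR (map (lw alpha beta) CL) = a -> sumR (map (lw alpha beta) SL) = b ->
  forall k Q, sumR (map (wt alpha beta) (filter (fun w => decb (Q (map bit w))) (words_le (CL ++ SL) k)))
     = Gf a b k Q.
Proof.
  intros HC HS Ha Hb k. induction k; intros Q.
  - simpl. unfold decb, indP. destruct excluded_middle_informative; simpl; unfold wt; simpl; lra.
  - rewrite sumR_filter. simpl. rewrite sumR_flat_map, map_app, sumR_app.
    assert (Hx : forall x, sumR (map (fun w => if decb (Q (map bit w)) then wt alpha beta w else 0)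
                         (map (cons x) (words_le (CL ++ SL) k)))
                 = lw alpha beta x * Gf a b k (fun w => Q (bit x :: w))).
    { intros x. rewrite <- IHk, sumR_filter, map_map, <- sumR_scal. apply f_equal, map_ext. intros w.
      simpl. destruct decb; unfold wt; simpl; lra. }
    rewrite (map_ext_in _ (fun x => lw alpha beta x * Gf a b k (fun w => Q (false :: w))) CL).
    2:{ intros x Hin. rewrite Hx, HC; auto. }
    rewrite (map_ext_in _ (fun x => lw alpha beta x * Gf a b k (fun w => Q (true :: w))) SL).
    2:{ intros x Hin. rewrite Hx, HS; auto. }
    rewrite !sumR_scal_r, Ha, Hb. unfold decb, indP. destruct excluded_middle_informative; unfold wt; simpl; lra.
Qed.

Fixpoint cart {A} (Ls : list (list A)) : list (list A) :=
  match Ls with [] => [[]] | L :: Ls => flat_map (fun x => map (cons x) (cart Ls)) L end.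

Lemma cart_in {A} (Ls : list (list A)) : forall ws, In ws (cart Ls) <-> Forall2 (@In A) ws Ls.
Proof. induction Ls as [|L Ls IH]; intros ws; simpl; split.
  - intros [<-|[]]; constructor.
  - intros H; inversion H; auto.
  - intros H. apply in_flat_map in H as [x [Hx H]]. apply in_map_iff in H as [v [<- Hv]].
    constructor; auto. apply IH; auto.
  - intros H; inversion H; subst. apply in_flat_map. exists x. split; auto. apply in_map. apply IH; auto.
Qed.

Lemma cart_nodup {A} (Ls : list (list A)) : Forall (@NoDup A) Ls -> NoDup (cart Ls).
Proof. induction Ls; simpl; intros H. constructor; [tauto|constructor].
  inversion H; subst. apply NoDup_fm_cons; auto. Qed.

Lemma cart_sum {A} (g : A -> R) (Ls : list (list A)) :
  sumR (map (fun ws => prodR (map g ws)) (cart Ls)) = prodR (map (fun L => sumR (map g L)) Ls).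
Proof. induction Ls as [|L Ls IH]; simpl; [lra|].
  rewrite sumR_flat_map. rewrite <- sumR_scal_r.
  apply f_equal, map_ext. intros x. rewrite map_map. simpl. rewrite sumR_scal, IH. lra. Qed.

Lemma cv_prod {A} (l : list A) (u : A -> nat -> R) (t : A -> R) :
  (forall x, In x l -> Un_cv (u x) (t x)) ->
  Un_cv (fun k => prodR (map (fun x => u x k) l)) (prodR (map t l)).
Proof. induction l; simpl; intros H. apply cv_const.
  apply CV_mult; auto. Qed.

Lemma Forall2_nth_iff {A B} (P : A -> B -> Prop) (l1 : list A) (l2 : list B) d1 d2 :
  Forall2 P l1 l2 <-> length l1 = length l2 /\ forall k, (k < length l2)%nat -> P (nth k l1 d1) (nth k l2 d2).
Proof. revert l2; induction l1 as [|x l1 IH]; intros l2; split.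
  - intros H; inversion H; subst; simpl; split; auto; intros; lia.
  - intros [H _]; destruct l2; [constructor|discriminate].
  - intros H; inversion H; subst. apply IH in H4 as [H4 H5]. simpl. split; [lia|].
    intros [|k] Hk; simpl; auto. apply H5; simpl in Hk; lia.
  - intros [H1 H2]. destruct l2 as [|y l2]; [discriminate|]. constructor.
    + apply (H2 0%nat); simpl; lia.
    + apply IH. simpl in H1. split; [lia|]. intros k Hk. apply (H2 (S k)); simpl; lia.
Qed.

Lemma NoDup_app_disj {A} (l1 l2 : list A) x : NoDup (l1 ++ l2) -> In x l1 -> ~ In x l2.
Proof. induction l1; simpl; intros H Hx Hx2; [contradiction|]. destruct Hx as [<-|Hx].
  - inversion H; subst. apply H2. apply in_or_app; auto.
  - inversion H; subst. eapply IHl1; eauto. Qed.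

Lemma in_firstn' {A} n (l : list A) x : In x (firstn n l) -> In x l.
Proof. intros H. rewrite <- (firstn_skipn n l). apply in_or_app; auto. Qed.
Lemma in_skipn' {A} n (l : list A) x : In x (skipn n l) -> In x l.
Proof. intros H. rewrite <- (firstn_skipn n l). apply in_or_app; auto. Qed.

Lemma memb_In j S : memb j S = true <-> In j S.
Proof. unfold memb. rewrite existsb_exists. split.
  - intros [x [Hx He]]. apply Nat.eqb_eq in He. subst; auto.
  - intros H. exists j. split; auto. apply Nat.eqb_refl. Qed.

Lemma perm_in_seq J p j : Permutation p (seq 0 J) -> (In j p <-> (j < J)%nat).
Proof. intros Hp. split; intros H.
  - apply (Permutation_in _ Hp) in H. apply in_seq in H. lia.
  - apply (Permutation_in _ (Permutation_sym Hp)). apply in_seq. lia. Qed.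

Lemma perm_nodup J p : Permutation p (seq 0 J) -> NoDup p.
Proof. intros Hp. apply (Permutation_NoDup (Permutation_sym Hp)). apply seq_NoDup. Qed.

Lemma sumR_zeros {T} (l : list T) : sumR (map (fun _ => 0) l) = 0.
Proof. induction l; simpl; [|rewrite IHl]; lra. Qed.

Lemma beta_of_split J beta p l1 l2 : Permutation p (seq 0 J) -> p = l1 ++ l2 ->
  beta_of J beta l2 = sumR (map beta l2) /\ beta_of J beta l1 = sumR (map beta l1).
Proof. intros Hp He. pose proof (perm_nodup J p Hp) as Hnd. rewrite He in Hnd.
  unfold beta_of.
  rewrite !(sumR_perm _ _ (Permutation_map _ (Permutation_sym Hp))). rewrite He, !map_app, !sumR_app.
  split.
  - rewrite (map_ext_in _ (fun _ => 0) l1).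
    2:{ intros j Hj. destruct (memb j l2) eqn:Hm; auto. apply memb_In in Hm.
        exfalso. eapply NoDup_app_disj; eauto. }
    rewrite (map_ext_in _ beta l2).
    2:{ intros j Hj. assert (memb j l2 = true) by (apply memb_In; auto). rewrite H; auto. }
    rewrite sumR_zeros. lra.
  - rewrite (map_ext_in _ (fun _ => 0) l2).
    2:{ intros j Hj. destruct (memb j l1) eqn:Hm; auto. apply memb_In in Hm.
        exfalso. eapply NoDup_app_disj; eauto. }
    rewrite (map_ext_in _ beta l1).
    2:{ intros j Hj. assert (memb j l1 = true) by (apply memb_In; auto). rewrite H; auto. }
    rewrite sumR_zeros. lra.
Qed.

Lemma bFirst_eq J beta p l : Permutation p (seq 0 J) -> bFirst J beta p l = sumR (map beta (firstn l p)).
Proof. intros Hp. apply (beta_of_split J beta p _ (skipn l p) Hp). symmetry; apply firstn_skipn. Qed.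
Lemma bLater_eq J beta p l : Permutation p (seq 0 J) -> bLater J beta p l = sumR (map beta (skipn l p)).
Proof. intros Hp. apply (beta_of_split J beta p (firstn l p) _ Hp). symmetry; apply firstn_skipn. Qed.

Lemma bFirst_bLater J beta p l : Permutation p (seq 0 J) -> prob_vector J beta ->
  bFirst J beta p l + bLater J beta p l = 1.
Proof. intros Hp [_ H1]. rewrite bFirst_eq, bLater_eq by auto. rewrite <- sumR_app, <- map_app, firstn_skipn.
  rewrite (sumR_perm _ _ (Permutation_map _ Hp)). auto. Qed.

Lemma sumR_pos_elem {T} (f : T -> R) l x : In x l -> (forall y, In y l -> 0 <= f y) -> 0 < f x -> 0 < sumR (map f l).
Proof. intros Hx Hp Hf. apply in_split in Hx as [l1 [l2 ->]]. rewrite map_app, sumR_app. simpl.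
  assert (0 <= sumR (map f l1)). { apply sumR_nonneg. intros y Hy. apply in_map_iff in Hy as [z [<- Hz]]. apply Hp. apply in_or_app; auto. }
  assert (0 <= sumR (map f l2)). { apply sumR_nonneg. intros y Hy. apply in_map_iff in Hy as [z [<- Hz]]. apply Hp. apply in_or_app; simpl; auto. }
  lra. Qed.

Lemma sumR_nonneg_map {T} (f : T -> R) l : (forall y, In y l -> 0 <= f y) -> 0 <= sumR (map f l).
Proof. intros H. apply sumR_nonneg. intros y Hy. apply in_map_iff in Hy as [z [<- Hz]]. auto. Qed.

Lemma beta_pos_p J beta p j : Permutation p (seq 0 J) -> prob_vector J beta -> In j p -> 0 < beta j.
Proof. intros Hp [Hb _] Hj. apply Hb. apply (perm_in_seq J p j Hp); auto. Qed.

Lemma bFirst_pos J beta p k : (0 < J)%nat -> Permutation p (seq 0 J) -> prob_vector J beta ->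
  0 < bFirst J beta p (S k).
Proof. intros HJ Hp Hb. rewrite bFirst_eq by auto.
  destruct p as [|s p'].
  - apply Permutation_length in Hp. simpl in Hp. rewrite length_seq in Hp. lia.
  - apply (sumR_pos_elem _ _ s). simpl; auto.
    + intros y Hy. apply Rlt_le. apply (beta_pos_p J beta (s :: p')); auto.
      eapply in_firstn'; eauto.
    + apply (beta_pos_p J beta (s :: p')); simpl; auto.
Qed.

Definition CLk I J E (p : list nat) l := map Cust (filter (Ub E J (firstn l p)) (seq 0 I)).
Definition SLk (p : list nat) l := map Serv (skipn l p).

Lemma letter_ok_iff I J E p l x : letter_ok I J E p l x <-> In x (CLk I J E p l ++ SLk p l).
Proof. unfold CLk, SLk. rewrite in_app_iff, !in_map_iff. destruct x as [i|j]; simpl; split.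
  - intros [Hi Hu]. left. exists i. split; auto. apply filter_In. split; auto. apply in_seq; lia.
  - intros [[i' [He Hin]]|[j [He _]]]; [|discriminate]. inversion He; subst.
    apply filter_In in Hin as [H1 H2]. apply in_seq in H1. split; [lia|auto].
  - intros H. right. exists j. auto.
  - intros [[i' [He _]]|[j' [He Hin]]]; [discriminate|]. inversion He; subst; auto.
Qed.

Lemma alph_nodup I J E p l : NoDup p -> NoDup (CLk I J E p l ++ SLk p l).
Proof. intros Hp. unfold CLk, SLk. apply NoDup_app.
  - apply FinFun.Injective_map_NoDup. intros u v H; inversion H; auto.
    apply NoDup_filter, seq_NoDup.
  - apply FinFun.Injective_map_NoDup. intros u v H; inversion H; auto.
    rewrite <- (firstn_skipn l p) in Hp. eapply NoDup_app_remove_l; eauto.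
  - intros x H1 H2. apply in_map_iff in H1 as [i [<- _]]. apply in_map_iff in H2 as [j [He _]]. discriminate.
Qed.

Lemma alpha_of_filter (I : nat) (alpha : nat -> R) (P : nat -> bool) : alpha_of I alpha P = sumR (map alpha (filter P (seq 0 I))).
Proof. unfold alpha_of. rewrite sumR_filter. reflexivity. Qed.

Lemma sum_CLk I J E alpha beta p l : sumR (map (lw alpha beta) (CLk I J E p l)) = aL I J E alpha p l.
Proof. unfold CLk, aL. rewrite alpha_of_filter, map_map. reflexivity. Qed.

Lemma sum_SLk J alpha beta p l : Permutation p (seq 0 J) -> sumR (map (lw alpha beta) (SLk p l)) = bLater J beta p l.
Proof. intros Hp. unfold SLk. rewrite bLater_eq, map_map by auto. reflexivity. Qed.

Lemma alpha_of_nonneg (I : nat) (alpha : nat -> R) (P : nat -> bool) : prob_vector I alpha -> 0 <= alpha_of I alpha P.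
Proof. intros [Ha _]. rewrite alpha_of_filter. apply sumR_nonneg_map.
  intros i Hi. apply filter_In in Hi as [Hi _]. apply in_seq in Hi. apply Rlt_le, Ha. lia. Qed.

Lemma bLater_nonneg J beta p l : Permutation p (seq 0 J) -> prob_vector J beta -> 0 <= bLater J beta p l.
Proof. intros Hp Hb. rewrite bLater_eq by auto. apply sumR_nonneg_map.
  intros j Hj. apply Rlt_le. apply (beta_pos_p J beta p); auto. eapply in_skipn'; eauto. Qed.

Lemma Cb_Ub (J : nat) (E : nat -> nat -> bool) (p : list nat) (l i : nat) : Permutation p (seq 0 J) ->
  Cb E (skipn l p) i = negb (Ub E J (firstn l p) i).
Proof. intros Hp. unfold Cb, Ub. rewrite negb_involutive. apply eq_true_iff_eq.
  pose proof (perm_nodup J p Hp) as Hnd. rewrite <- (firstn_skipn l p) in Hnd.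
  rewrite !existsb_exists. split.
  - intros [j [Hj He]]. exists j. split.
    + apply in_seq. assert (In j p) by (eapply in_skipn'; eauto). apply (perm_in_seq J p j Hp) in H. lia.
    + rewrite He. simpl. destruct (memb j (firstn l p)) eqn:Hm; auto.
      apply memb_In in Hm. exfalso. eapply NoDup_app_disj; eauto.
  - intros [j [Hj He]]. apply andb_prop in He as [He Hm]. exists j. split; auto.
    apply in_seq in Hj. assert (In j p) by (apply (perm_in_seq J p j Hp); lia).
    rewrite <- (firstn_skipn l p) in H. apply in_app_or in H as [H|H]; auto.
    apply memb_In in H. rewrite H in Hm. discriminate.
Qed.

Lemma aCLater_eq I J E alpha p l : Permutation p (seq 0 J) -> prob_vector I alpha ->
  aCLater I E alpha p l = 1 - aL I J E alpha p l.
Proof. intros Hp [_ H1]. unfold aCLater, aL, alpha_of.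
  rewrite (map_ext _ (fun i => alpha i - (if Ub E J (firstn l p) i then alpha i else 0))).
  2:{ intros i. rewrite (Cb_Ub J) by auto. destruct Ub; simpl; lra. }
  rewrite <- H1. clear H1. generalize (seq 0 I). induction l0; simpl; lra.
Qed.

Lemma server_has_nbr I J E j : (0 < I)%nat -> connected_graph I J E -> (j < J)%nat ->
  exists i, (i < I)%nat /\ E i j = true.
Proof. intros HI Hc Hj. assert (H := Hc (inr j) (inl 0%nat) Hj HI).
  apply clos_rt_rt1n in H. inversion H; subst. destruct y as [i|j']; simpl in H0.
  - exists i; tauto.
  - contradiction.
Qed.

Lemma aCLater_pos I J E alpha p l : (0 < I)%nat -> connected_graph I J E -> Permutation p (seq 0 J) ->
  prob_vector I alpha -> (l < J)%nat -> 0 < aCLater I E alpha p l.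
Proof. intros HI Hc Hp Ha Hl.
  destruct (skipn l p) as [|j r] eqn:Hs.
  - apply (f_equal (@length nat)) in Hs. rewrite length_skipn, (Permutation_length Hp), length_seq in Hs. simpl in Hs. lia.
  - assert (Hj : In j p) by (apply (in_skipn' l); rewrite Hs; left; auto).
    apply (perm_in_seq J p j Hp) in Hj.
    destruct (server_has_nbr I J E j HI Hc Hj) as [i [Hi He]].
    unfold aCLater. rewrite alpha_of_filter. rewrite Hs.
    apply (sumR_pos_elem _ _ i).
    + apply filter_In. split; [apply in_seq; lia|]. simpl. rewrite He. auto.
    + intros y Hy. apply filter_In in Hy as [Hy _]. apply in_seq in Hy. apply Rlt_le, (proj1 Ha). lia.
    + apply (proj1 Ha); auto.
Qed.

Lemma crp_level I J E alpha beta p k : Permutation p (seq 0 J) -> CRP I J E alpha beta ->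
  (k < J - 1)%nat -> bFirst J beta p (S k) > aL I J E alpha p (S k).
Proof. intros Hp Hc Hk. unfold bFirst, aL. pose proof (perm_nodup J p Hp) as Hnd.
  assert (HL : length p = J) by (rewrite (Permutation_length Hp), length_seq; auto).
  apply Hc.
  - intros j Hj. apply (perm_in_seq J p j Hp). eapply in_firstn'; eauto.
  - destruct p as [|s p']; simpl in HL; [lia|]. exists s. simpl; auto.
  - destruct (skipn (S k) p) as [|j r] eqn:Hs.
    + apply (f_equal (@length nat)) in Hs. rewrite length_skipn in Hs. simpl in Hs. lia.
    + exists j. assert (Hj : In j (skipn (S k) p)) by (rewrite Hs; left; auto).
      split.
      * apply (perm_in_seq J p j Hp). eapply in_skipn'; eauto.
      * intros Hf. rewrite <- (firstn_skipn (S k) p) in Hnd. eapply NoDup_app_disj; eauto.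
Qed.

Definition lrange (I J : nat) (x : letter) : Prop :=
  match x with Cust i => (i < I)%nat | Serv j => (j < J)%nat end.

Lemma prodR_mult {T} (f g : T -> R) l : prodR (map (fun x => f x * g x) l) = prodR (map f l) * prodR (map g l).
Proof. induction l; simpl; [lra|rewrite IHl; ring]. Qed.

Lemma prod_delta (f : nat -> R) i0 n : prodR (map (fun i => if Nat.eqb i i0 then f i else 1) (seq 0 n)) = if Nat.ltb i0 n then f i0 else 1.
Proof. induction n; [simpl; destruct i0; reflexivity|].
  rewrite seq_S, map_app, prodR_app, IHn. simpl.
  destruct (Nat.eqb n i0) eqn:He.
  - apply Nat.eqb_eq in He; subst. rewrite Nat.ltb_irrefl. assert (Nat.ltb i0 (S i0) = true) by (apply Nat.ltb_lt; lia). rewrite H. ring.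
  - destruct (Nat.ltb i0 n) eqn:Hl.
    + apply Nat.ltb_lt in Hl. assert (Nat.ltb i0 (S n) = true) by (apply Nat.ltb_lt; lia). rewrite H; ring.
    + apply Nat.ltb_ge in Hl. apply Nat.eqb_neq in He. assert (Nat.ltb i0 (S n) = false) by (apply Nat.ltb_ge; lia). rewrite H; ring.
Qed.

Lemma prodR_ones {T} (l : list T) : prodR (map (fun _ => 1) l) = 1.
Proof. induction l; simpl; [|rewrite IHl]; lra. Qed.

Lemma cnt_prod I J alpha beta F : (forall x, In x F -> lrange I J x) ->
  prodR (map (fun i => alpha i ^ cnt (is_cust i) F) (seq 0 I)) *
  prodR (map (fun j => beta j ^ cnt (is_serv j) F) (seq 0 J)) = prodR (map (lw alpha beta) F).
Proof. induction F as [|x F IH]; intros H; simpl.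
  - unfold cnt; simpl. rewrite !prodR_ones. lra.
  - rewrite <- IH by (intros; apply H; right; auto).
    assert (Hx : lrange I J x) by (apply H; left; auto).
    destruct x as [i0|j0]; simpl in Hx |- *.
    + rewrite (map_ext (fun i => alpha i ^ cnt (is_cust i) (Cust i0 :: F))
                 (fun i => (if Nat.eqb i i0 then alpha i else 1) * alpha i ^ cnt (is_cust i) F)).
      2:{ intros i. unfold cnt; simpl. destruct (Nat.eqb i i0); simpl; ring. }
      rewrite (map_ext (fun j => beta j ^ cnt (is_serv j) (Cust i0 :: F)) (fun j => beta j ^ cnt (is_serv j) F)).
      2:{ intros j. unfold cnt; simpl. auto. }
      rewrite prodR_mult, prod_delta. assert (Nat.ltb i0 I = true) by (apply Nat.ltb_lt; auto). rewrite H0. ring.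
    + rewrite (map_ext (fun j => beta j ^ cnt (is_serv j) (Serv j0 :: F))
                 (fun j => (if Nat.eqb j j0 then beta j else 1) * beta j ^ cnt (is_serv j) F)).
      2:{ intros j. unfold cnt; simpl. destruct (Nat.eqb j j0); simpl; ring. }
      rewrite (map_ext (fun i => alpha i ^ cnt (is_cust i) (Serv j0 :: F)) (fun i => alpha i ^ cnt (is_cust i) F)).
      2:{ intros i. unfold cnt; simpl. auto. }
      rewrite prodR_mult, prod_delta. assert (Nat.ltb j0 J = true) by (apply Nat.ltb_lt; auto). rewrite H0. ring.
Qed.

Lemma prod_interleave alpha beta p : forall ws, (length ws <= length p)%nat ->
  prodR (map (lw alpha beta) (interleave p ws)) = prodR (map beta p) * prodR (map (wt alpha beta) ws).
Proof. induction p as [|s p IH]; intros ws Hl.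
  - destruct ws; simpl in Hl; [simpl; lra|lia].
  - destruct ws as [|w ws]; simpl.
    + rewrite IH by (simpl; lia). simpl. ring.
    + rewrite map_app, prodR_app, IH by (simpl in Hl; lia). unfold wt at 2. simpl. ring.
Qed.

Lemma in_interleave p : forall ws x, In x (interleave p ws) ->
  (exists s, In s p /\ x = Serv s) \/ (exists w, In w ws /\ In x w).
Proof. induction p as [|s p IH]; intros ws x H; simpl in H; [contradiction|].
  destruct ws as [|w ws]; simpl in H.
  - destruct H as [<-|H]. left; exists s; simpl; auto.
    destruct (IH [] x H) as [[s' [H1 H2]]|[w [[] _]]]. left; exists s'; simpl; auto.
  - destruct H as [<-|H]. left; exists s; simpl; auto.
    apply in_app_or in H as [H|H]. right; exists w; simpl; auto.
    destruct (IH ws x H) as [[s' [H1 H2]]|[w' [H1 H2]]]. left; exists s'; simpl; auto.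
    right; exists w'; simpl; auto.
Qed.

Lemma piZ_eq I J alpha beta B p ws : Permutation p (seq 0 J) -> (length ws <= length p)%nat ->
  (forall w x, In w ws -> In x w -> lrange I J x) ->
  piZ I J alpha beta B (p, ws) = Bs J beta B * prodR (map (wt alpha beta) ws).
Proof. intros Hp Hl Hr. unfold piZ, Bs, flatZ. simpl.
  rewrite Rmult_assoc, cnt_prod; [rewrite prod_interleave by auto|].
  - rewrite (prodR_perm _ _ (Permutation_map _ Hp)). ring.
  - intros x Hx. apply in_interleave in Hx as [[s [Hs ->]]|[w [Hw Hx]]].
    + simpl. apply (perm_in_seq J p s Hp); auto.
    + eapply Hr; eauto.
Qed.

Lemma piZ_pos I J alpha beta B z : 0 < B -> prob_vector I alpha -> prob_vector J beta -> 0 <= piZ I J alpha beta B z.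
Proof. intros HB [Ha _] [Hb _]. unfold piZ. apply Rlt_le. apply Rmult_lt_0_compat; [apply Rmult_lt_0_compat; auto|].
  - apply prodR_pos. intros y Hy. apply in_map_iff in Hy as [i [<- Hi]]. apply in_seq in Hi. apply pow_lt, Ha. lia.
  - apply prodR_pos. intros y Hy. apply in_map_iff in Hy as [i [<- Hi]]. apply in_seq in Hi. apply pow_lt, Hb. lia.
Qed.

Lemma nth_map_seq {A} (f : nat -> A) m k d : (k < m)%nat -> nth k (map f (seq 0 m)) d = f k.
Proof. intros Hk. rewrite (nth_indep _ d (f 0%nat)) by (rewrite length_map, length_seq; lia).
  rewrite map_nth, seq_nth by lia. reflexivity. Qed.

Lemma decb_true P : decb P = true <-> P.
Proof. unfold decb. destruct excluded_middle_informative; split; auto; discriminate. Qed.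

Lemma le_fold_max {A} (f : A -> nat) l x : In x l -> (f x <= fold_right Nat.max 0%nat (map f l))%nat.
Proof. induction l; simpl; [tauto|]. intros [<-|H]; [lia|]. specialize (IHl H). lia. Qed.

Definition Ls I J E (p : list nat) (Q : nat -> list bool -> Prop) n :=
  map (fun k => filter (fun w => decb (Q k (map bit w))) (words_le (CLk I J E p (S k) ++ SLk p (S k)) n)) (seq 0 (J-1)).
Definition lz I J E p Q n : list Zstate := map (pair p) (cart (Ls I J E p Q n)).

Lemma mem_lz I J E p Q n z : In z (lz I J E p Q n) <->
  fst z = p /\ length (snd z) = (J-1)%nat /\ forall k, (k < J-1)%nat ->
    (length (nth k (snd z) []) <= n)%nat /\ (forall x, In x (nth k (snd z) []) -> letter_ok I J E p (S k) x)
    /\ Q k (map bit (nth k (snd z) [])).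
Proof. unfold lz. rewrite in_map_iff. split.
  - intros [ws [<- Hws]]. apply cart_in in Hws. apply (Forall2_nth_iff _ _ _ [] []) in Hws as [H1 H2].
    unfold Ls in *. rewrite length_map, length_seq in *. simpl. split; auto. split; auto.
    intros k Hk. specialize (H2 k Hk). rewrite nth_map_seq in H2 by auto.
    apply filter_In in H2 as [H2 H3]. apply (proj1 (decb_true _)) in H3. apply words_le_in in H2 as [H2 H4].
    split; auto. split; auto. intros x Hx. apply letter_ok_iff; auto.
  - intros [H1 [H2 H3]]. exists (snd z). split; [destruct z; simpl in *; subst; auto|].
    apply cart_in. apply (Forall2_nth_iff _ _ _ [] []). unfold Ls. rewrite length_map, length_seq. split; auto.
    intros k Hk. rewrite nth_map_seq by auto. destruct (H3 k Hk) as [A1 [A2 A3]].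
    apply filter_In. split; [|apply decb_true; auto]. apply words_le_in. split; auto.
    intros x Hx. apply letter_ok_iff; auto.
Qed.

Lemma fiber I J E alpha beta B p (Q : nat -> list bool -> Prop) (t : nat -> R) :
  Permutation p (seq 0 J) -> prob_vector I alpha -> prob_vector J beta -> 0 < B ->
  (forall k, (k < J-1)%nat -> Un_cv (fun n => Gf (aL I J E alpha p (S k)) (bLater J beta p (S k)) n (Q k)) (t k)) ->
  nn_sum_on (fun z => valid_Z I J E z /\ fst z = p /\ forall k, (k < J-1)%nat -> Q k (map bit (nth k (snd z) [])))
    (piZ I J alpha beta B) (Bs J beta B * prodR (map t (seq 0 (J-1)))).
Proof.
  intros Hp Ha Hb HB Ht.
  apply (exhaust _ _ _ (lz I J E p Q)).
  - intros x _. apply piZ_pos; auto.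
  - intros n. apply FinFun.Injective_map_NoDup. { intros u v H; inversion H; auto. }
    apply cart_nodup. apply Forall_forall. intros L HL. unfold Ls in HL. apply in_map_iff in HL as [k [<- _]].
    apply NoDup_filter, words_le_nodup, alph_nodup. apply (perm_nodup J p Hp).
  - intros n z Hz. apply mem_lz in Hz as [H1 [H2 H3]]. split; [|split; auto; intros k Hk; apply H3; auto].
    split; [rewrite H1; auto|]. split; auto. intros k Hk. rewrite H1. apply Forall_forall. apply H3; auto.
  - intros z [[Hv1 [Hv2 Hv3]] [H1 H2]].
    exists (fold_right Nat.max 0%nat (map (@length letter) (snd z))).
    apply mem_lz. split; auto. split; auto. intros k Hk. split; [|split].
    + apply (le_fold_max (@length letter)). apply nth_In. lia.
    + intros x Hx. rewrite <- H1. specialize (Hv3 k Hk). rewrite Forall_forall in Hv3. auto.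
    + apply H2; auto.
  - intros n z Hz. apply mem_lz in Hz as [H1 [H2 H3]]. apply mem_lz. split; auto. split; auto.
    intros k Hk. destruct (H3 k Hk) as [A1 [A2 A3]]. split; [lia|auto].
  - apply (Un_cv_ext (fun n => Bs J beta B * prodR (map (fun k => Gf (aL I J E alpha p (S k)) (bLater J beta p (S k)) n (Q k)) (seq 0 (J-1))))).
    + intros n. unfold lz. rewrite map_map.
      rewrite (map_ext_in _ (fun ws => Bs J beta B * prodR (map (wt alpha beta) ws))).
      2:{ intros ws Hws. apply piZ_eq; auto.
          - apply cart_in in Hws. apply (Forall2_nth_iff _ _ _ [] []) in Hws as [H1 _].
            unfold Ls in H1. rewrite length_map, length_seq in H1. rewrite H1, (Permutation_length Hp), length_seq. lia.
          - intros w x Hw Hx.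
            assert (Hz : In (p, ws) (lz I J E p Q n)) by (unfold lz; apply in_map; auto).
            apply mem_lz in Hz as [_ [H2 H3]]. simpl in *.
            destruct (In_nth ws w [] Hw) as [k [Hk <-]]. rewrite H2 in Hk.
            destruct (H3 k Hk) as [_ [A2 _]]. specialize (A2 x Hx).
            destruct x as [i|j]; unfold letter_ok in A2; unfold lrange. tauto.
            apply (perm_in_seq J p j Hp). eapply in_skipn'; eauto. }
      rewrite sumR_scal, cart_sum. unfold Ls. rewrite map_map. f_equal. f_equal. apply map_ext. intros k.
      symmetry. apply level_sum.
      * intros x Hx. unfold CLk in Hx. apply in_map_iff in Hx as [i [<- _]]. auto.
      * intros x Hx. unfold SLk in Hx. apply in_map_iff in Hx as [i [<- _]]. auto.
      * apply sum_CLk.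
      * apply sum_SLk; auto.
    + apply CV_mult. apply cv_const. apply cv_prod. intros k Hk. apply in_seq in Hk. apply Ht. lia.
Qed.

Lemma nn_sum_ext {T} (P P' : T -> Prop) f L : (forall z, P z <-> P' z) -> nn_sum_on P f L -> nn_sum_on P' f L.
Proof. intros He [H1 H2]. split.
  - intros s [l [Hn [HF ->]]]. apply H1. exists l. split; auto. split; auto.
    eapply Forall_impl; [|eauto]. intros; apply He; auto.
  - intros M HM. apply H2. intros s [l [Hn [HF ->]]]. apply HM. exists l. split; auto. split; auto.
    eapply Forall_impl; [|eauto]. intros; apply He; auto.
Qed.

Lemma prod_l_shift J f : prod_l J f = prodR (map (fun k => f (S k)) (seq 0 (J-1))).
Proof. unfold prod_l. rewrite <- seq_shift, map_map. reflexivity. Qed.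

Lemma map_nth_iff {A C} (f : A -> C) l l' d n : length l = n -> length l' = n ->
  (map f l = l' <-> forall k, (k < n)%nat -> f (nth k l d) = nth k l' (f d)).
Proof. intros H1 H2. split.
  - intros <- k Hk. rewrite map_nth. reflexivity.
  - intros H. apply (nth_ext _ _ (f d) (f d)). rewrite length_map; lia.
    intros k Hk. rewrite length_map in Hk. rewrite map_nth. apply H. lia.
Qed.

Lemma pair_eq_iff {A C} (a a' : A) (c c' : C) : (a, c) = (a', c') <-> a = a' /\ c = c'.
Proof. split; [intros H; inversion H; auto|intros [-> ->]; auto]. Qed.

Lemma cnt_isC w : cnt isC w = n0b (map bit w).
Proof. unfold cnt, n0b. induction w; simpl; auto. unfold isC at 1. destruct (bit a); simpl; auto. Qed.
Lemma cnt_isS w : cnt isS w = n1b (map bit w).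
Proof. unfold cnt, n1b. induction w; simpl; auto. unfold isS at 1. destruct (bit a); simpl; auto. Qed.
Lemma n0b_n1b w : (n0b w + n1b w)%nat = length w.
Proof. unfold n0b, n1b. induction w; simpl; auto. destruct a; simpl; lia. Qed.

Ltac fib_equiv Hl :=
  intros z; split;
  [ intros [Hv [Hm1 Hm2]]; split; [exact Hv|]; pose proof (proj1 (proj2 Hv)) as Hlen;
    apply pair_eq_iff; split; [exact Hm1|]; rewrite (map_nth_iff _ _ _ [] _ Hlen Hl);
    intros k Hk; specialize (Hm2 k Hk)
  | intros [Hv Hm]; split; [exact Hv|]; pose proof (proj1 (proj2 Hv)) as Hlen;
    apply pair_eq_iff in Hm as [Hm1 Hm2]; split; [exact Hm1|];
    intros k Hk; rewrite (map_nth_iff _ _ _ [] _ Hlen Hl) in Hm2; specialize (Hm2 k Hk) ].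

Theorem theorem5p2
  (I J : nat) (E : nat -> nat -> bool) (alpha beta : nat -> R) (B : R)
  (HI : (0 < I)%nat) (HJ : (0 < J)%nat)
  (Hconn : connected_graph I J E)
  (Halpha : prob_vector I alpha) (Hbeta : prob_vector J beta)
  (Hcrp : CRP I J E alpha beta)
  (HB : 0 < B)
  (HZ : nn_sum_on (valid_Z I J E) (piZ I J alpha beta B) 1) :
  (forall (p : list nat) (ws : list (list bool)),
     Permutation p (seq 0 J) -> length ws = (J - 1)%nat ->
     nn_sum_on (fun z => valid_Z I J E z /\ Wmap z = (p, ws))
       (piZ I J alpha beta B) (piW I J E alpha beta B p ws)) /\
  (forall (p : list nat) (nm : list (nat * nat)),
     Permutation p (seq 0 J) -> length nm = (J - 1)%nat ->
     nn_sum_on (fun z => valid_Z I J E z /\ Umap z = (p, nm))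
       (piZ I J alpha beta B) (piU I J E alpha beta B p nm)) /\
  (forall (p : list nat) (ns : list nat),
     Permutation p (seq 0 J) -> length ns = (J - 1)%nat ->
     nn_sum_on (fun z => valid_Z I J E z /\ Xmap z = (p, ns))
       (piZ I J alpha beta B) (piX I J E alpha beta B p ns)) /\
  (forall (p : list nat) (ms : list nat),
     Permutation p (seq 0 J) -> length ms = (J - 1)%nat ->
     nn_sum_on (fun z => valid_Z I J E z /\ Ymap z = (p, ms))
       (piZ I J alpha beta B) (piY I J E alpha beta B p ms)) /\
  (forall (p : list nat) (rs : list nat),
     Permutation p (seq 0 J) -> length rs = (J - 1)%nat ->
     nn_sum_on (fun z => valid_Z I J E z /\ Vmap z = (p, rs))
       (piZ I J alpha beta B) (piV I J E alpha beta B p rs)) /\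
  (forall (p : list nat),
     Permutation p (seq 0 J) ->
     nn_sum_on (fun z => valid_Z I J E z /\ Rmap z = p)
       (piZ I J alpha beta B) (piR I J E alpha beta B p)).
Proof.
  split; [|split; [|split; [|split; [|split]]]].
  -
    intros p ws Hp Hl.
    apply (nn_sum_ext (fun z => valid_Z I J E z /\ fst z = p /\ forall k, (k < J-1)%nat ->
             (fun k b => b = nth k ws []) k (map bit (nth k (snd z) [])))).
    { fib_equiv Hl; exact Hm2. }
    unfold piW. rewrite prod_l_shift.
    rewrite (map_ext_in _ (fun k => aL I J E alpha p (S k) ^ n0b (nth k ws []) * bLater J beta p (S k) ^ n1b (nth k ws []))).
    2:{ intros k _. replace (S k - 1)%nat with k by lia. reflexivity. }
    apply (fiber I J E alpha beta B p (fun k b => b = nth k ws [])); auto. intros k Hk.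
    apply (cv_ev (length (nth k ws []))). intros n Hn. rewrite Gf_pat by auto. apply pw_eq.
  -
    intros p nm Hp Hl.
    apply (nn_sum_ext (fun z => valid_Z I J E z /\ fst z = p /\ forall k, (k < J-1)%nat ->
             (fun k b => n0b b = fst (nth k nm (0,0)%nat) /\ n1b b = snd (nth k nm (0,0)%nat)) k (map bit (nth k (snd z) [])))).
    { fib_equiv Hl.
      - simpl in Hm2. rewrite cnt_isC, cnt_isS. destruct Hm2 as [-> ->]. change (cnt isC [], cnt isS []) with (0%nat, 0%nat). destruct (nth k nm (0%nat,0%nat)); reflexivity.
      - simpl in Hm2. change (cnt isC [], cnt isS []) with (0%nat, 0%nat) in Hm2. rewrite <- Hm2, <- cnt_isC, <- cnt_isS. simpl. auto. }
    unfold piU. rewrite prod_l_shift.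
    apply (fiber I J E alpha beta B p (fun k b => n0b b = fst (nth k nm (0,0)%nat) /\ n1b b = snd (nth k nm (0,0)%nat))); auto. intros k Hk. simpl.
    replace (S k - 1)%nat with k by lia. rewrite ?Nat.sub_0_r.
    apply (cv_ev (fst (nth k nm (0,0)%nat) + snd (nth k nm (0,0)%nat))). intros n Hn.
    rewrite (Gf_cnt _ _ (fst (nth k nm (0,0)%nat) + snd (nth k nm (0,0)%nat))); auto.
  -
    intros p ns Hp Hl.
    apply (nn_sum_ext (fun z => valid_Z I J E z /\ fst z = p /\ forall k, (k < J-1)%nat ->
             (fun k b => n0b b = nth k ns 0%nat) k (map bit (nth k (snd z) [])))).
    { fib_equiv Hl.
      - simpl in Hm2. rewrite cnt_isC. exact Hm2.
      - change (cnt isC []) with 0%nat in Hm2. rewrite <- cnt_isC. exact Hm2. }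
    unfold piX. rewrite prod_l_shift.
    apply (fiber I J E alpha beta B p (fun k b => n0b b = nth k ns 0%nat)); auto. intros k Hk. simpl.
    replace (S k - 1)%nat with k by lia. rewrite ?Nat.sub_0_r.
    pose proof (bFirst_bLater J beta p (S k) Hp Hbeta).
    pose proof (bFirst_pos J beta p k HJ Hp Hbeta).
    replace (bFirst J beta p (S k)) with (1 - bLater J beta p (S k)) by lra.
    rewrite Nat.add_1_r. apply GX_cv.
    + apply alpha_of_nonneg; auto.
    + split; [apply bLater_nonneg; auto|lra].
  -
    intros p ms Hp Hl.
    apply (nn_sum_ext (fun z => valid_Z I J E z /\ fst z = p /\ forall k, (k < J-1)%nat ->
             (fun k b => n1b b = nth k ms 0%nat) k (map bit (nth k (snd z) [])))).
    { fib_equiv Hl.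
      - simpl in Hm2. rewrite cnt_isS. exact Hm2.
      - change (cnt isS []) with 0%nat in Hm2. rewrite <- cnt_isS. exact Hm2. }
    unfold piY. rewrite prod_l_shift.
    apply (fiber I J E alpha beta B p (fun k b => n1b b = nth k ms 0%nat)); auto. intros k Hk. simpl.
    replace (S k - 1)%nat with k by lia. rewrite ?Nat.sub_0_r.
    rewrite (aCLater_eq I J) by auto.
    pose proof (aCLater_pos I J E alpha p (S k) HI Hconn Hp Halpha ltac:(lia)).
    rewrite (aCLater_eq I J) in H by auto.
    rewrite Nat.add_1_r. apply GY_cv.
    + apply bLater_nonneg; auto.
    + split; [apply alpha_of_nonneg; auto|lra].
  -
    intros p rs Hp Hl.
    apply (nn_sum_ext (fun z => valid_Z I J E z /\ fst z = p /\ forall k, (k < J-1)%nat ->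
             (fun k b => length b = nth k rs 0%nat) k (map bit (nth k (snd z) [])))).
    { fib_equiv Hl.
      - simpl in Hm2. rewrite cnt_isC, cnt_isS, n0b_n1b. exact Hm2.
      - change (cnt isC [] + cnt isS [])%nat with 0%nat in Hm2. rewrite <- n0b_n1b, <- cnt_isC, <- cnt_isS. exact Hm2. }
    unfold piV. rewrite prod_l_shift.
    apply (fiber I J E alpha beta B p (fun k b => length b = nth k rs 0%nat)); auto. intros k Hk. simpl.
    replace (S k - 1)%nat with k by lia. rewrite ?Nat.sub_0_r.
    apply (cv_ev (nth k rs 0%nat)). intros n Hn. apply Gf_len; auto.
  -
    intros p Hp.
    apply (nn_sum_ext (fun z => valid_Z I J E z /\ fst z = p /\ forall k, (k < J-1)%nat ->
             (fun k (b : list bool) => True) k (map bit (nth k (snd z) [])))).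
    { intros z; unfold Rmap; split; [intros [H1 [H2 _]]; split; auto|intros [H1 H2]; split; [auto|split; auto]]. }
    unfold piR. rewrite prod_l_shift.
    apply (fiber I J E alpha beta B p (fun k (b : list bool) => True)); auto. intros k Hk. simpl.
    pose proof (bFirst_bLater J beta p (S k) Hp Hbeta).
    pose proof (crp_level I J E alpha beta p k Hp Hcrp Hk).
    replace (bFirst J beta p (S k) - aL I J E alpha p (S k)) with
      (1 - aL I J E alpha p (S k) - bLater J beta p (S k)) by lra.
    apply GR_cv.
    + apply alpha_of_nonneg; auto.
    + apply bLater_nonneg; auto.
    + lra.
Qed.
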